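(* Let $A\in\mathbb{R}^{n\times n}$ and $C_i\in\mathbb{R}^{m_i\times n}$, $i\in\mathcal{N}=\{1,\dots,N\}$, and let $q\ge 0$ be an integer. Assume: (i) ($2q$-redundant observability) for every $\mathcal{N}'\subset\mathcal{N}$ with $|\mathcal{N}'|=N-2q$, the pair $(C',A)$ is observable, where $C'$ is the matrix obtained by stacking the $C_i$, $i\in\mathcal{N}'$; (ii) there exists a basis $\{v_1,\dots,v_n\}$ of $\mathbb{R}^n$ such that, for every $i\in\mathcal{N}$, the unobservable subspace $\mathcal{U}_i$ of the pair $(C_i,A)$ is the span of a subset of $\{v_1,\dots,v_n\}$. For such a basis define, for $i\in\mathcal{N}$ and $l\in\{1,\dots,n\}$, $s_i^l=1$ if $v_l\notin\mathcal{U}_i$ and $s_i^l=0$ if $v_l\in\mathcal{U}_i$. Then, for each $l=1,\dots,n$, $$|\{ i \in \mathcal{N} : s_i^l = 1 \}| \ge 2q+1.$$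
   Context: $\mathcal{U}_i$ denotes the unobservable subspace of $(C_i,A)$, i.e., the kernel of the observability matrix $\mathrm{col}(C_i, C_iA,\dots,C_iA^{n-1})$. $|\cdot|$ denotes cardinality. *)

(* Defs.v *)
From HB Require Import structures.
From mathcomp Require Import all_boot all_order all_algebra.
Set Implicit Arguments. Unset Strict Implicit. Unset Printing Implicit Defensive.
Import Order.TTheory GRing.Theory Num.Theory.
Local Open Scope ring_scope.

Definition unobs (R : fieldType) (p n : nat) (C : 'M[R]_(p, n)) (A : 'M[R]_n)
  (x : 'cV[R]_n) : bool :=
  [forall k : 'I_n, C *m (A ^+ k) *m x == 0].

Definition observable (R : fieldType) (p n : nat) (C : 'M[R]_(p, n)) (A : 'M[R]_n)
  : Prop := forall x : 'cV[R]_n, unobs C A x -> x = 0.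

Definition stack (R : fieldType) (N n : nat) (m : 'I_N -> nat)
  (C : forall i : 'I_N, 'M[R]_(m i, n)) (S : {set 'I_N}) :=
  \mxcol_(j < #|S|) C (enum_val j).

Definition is_basis (R : fieldType) (n : nat) (v : 'I_n -> 'cV[R]_n) : Prop :=
  (forall c : 'I_n -> R, \sum_(l < n) c l *: v l = 0 -> forall l, c l = 0) /\
  (forall x : 'cV[R]_n, exists c : 'I_n -> R, x = \sum_(l < n) c l *: v l).

Definition in_span (R : fieldType) (n : nat) (v : 'I_n -> 'cV[R]_n)
  (L : {set 'I_n}) (x : 'cV[R]_n) : Prop :=
  exists c : 'I_n -> R, x = \sum_(l in L) c l *: v l.

(* Main.v *)
Require Import Defs.
From HB Require Import structures.
From mathcomp Require Import all_boot all_order all_algebra.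
From mathcomp Require Import zify.
Import Order.TTheory GRing.Theory Num.Theory.
Local Open Scope ring_scope.

Lemma sub_card (T : finType) (A : {set T}) (k : nat) :
  (k <= #|A|)%N -> exists S : {set T}, S \subset A /\ #|S| = k.
Proof.
elim: k => [|k IH] hk; first by exists set0; rewrite sub0set cards0.
have [S [sSA cS]] := IH (ltnW hk).
have : (0 < #|A :\: S|)%N by rewrite cardsDS // cS subn_gt0.
case/card_gt0P => x; rewrite inE => /andP [xS xA].
exists (x |: S); split; first by rewrite subUset sub1set xA sSA.
by rewrite cardsU1 xS cS.
Qed.

Theorem lemma1 (R : realFieldType) (n N : nat) (m : 'I_N -> nat)
  (A : 'M[R]_n) (C : forall i : 'I_N, 'M[R]_(m i, n)) (q : nat) :
  (2 * q <= N)%N ->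
  (* (i) 2q-redundant observability *)
  (forall S : {set 'I_N}, #|S| = (N - 2 * q)%N -> observable (stack C S) A) ->
  (* (ii) for any basis v such that every U_i is spanned by a subset of it *)
  forall v : 'I_n -> 'cV[R]_n, is_basis v ->
  (forall i : 'I_N, exists L : {set 'I_n},
      forall x : 'cV[R]_n, unobs (C i) A x <-> in_span v L x) ->
  forall l : 'I_n, (2 * q + 1 <= #|[set i : 'I_N | ~~ unobs (C i) A (v l)]|)%N.
Proof.
move=> hq hobs v [hind _] _ l.
rewrite leqNgt addn1 ltnS; apply/negP => hT.
set T := [set i : 'I_N | ~~ unobs (C i) A (v l)] in hT.
have hc : (N - 2 * q <= #|~: T|)%N.
  by have := cardsC T; rewrite card_ord => h; lia.
have [S [sST cS]] := sub_card _ _ _ hc.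
have vl0 : v l = 0.
  apply: (hobs S cS); apply/forallP => k.
  rewrite /stack mxcol_mul mxcol_mul.
  apply/eqP; rewrite -[RHS]mxcol0.
  apply: eq_mxcol => j.
  have : enum_val j \in ~: T by apply: (subsetP sST); exact: enum_valP.
  rewrite !inE negbK => /forallP /(_ k) /eqP.
  by [].
have := hind (fun k => (k == l)%:R).
rewrite (bigD1 l) //= eqxx scale1r big1 ?addr0 ?vl0.
  by move=> /(_ erefl l); rewrite eqxx => /eqP; rewrite oner_eq0.
by move=> i /negbTE ->; rewrite scale0r.
Qed.
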